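(* Let $(p,q)$ be a piecewise elementary pair of partial isomorphisms of $\mathbb{Q}$ and suppose the triple $(p',q',w)$ liberates $p$ in $(p,q)$. Let $u$ be a reduced word that is either empty or of the form $u=t^nv$ ($n\neq0$, product reduced) such that $uw$ is reduced (no cancellation). Then there are partial isomorphisms $p''\supseteq p'$ and $q''\supseteq q'$ such that $(p'',q'',uw)$ liberates $p$ in $(p,q)$. The same holds with $p$ and $q$ interchanged: if $(p',q',w)$ liberates $q$ in $(p,q)$ and $u$ is empty or $u=s^mv$ ($m\ne0$) with $uw$ reduced, then there are $p''\supseteq p'$, $q''\supseteq q'$ with $(p'',q'',uw)$ liberating $q$ in $(p,q)$.
   Context: A partial isomorphism of $\mathbb{Q}$ is an order-preserving bijection $p$ between finite subsets $\mathrm{dom}(p),\mathrm{ran}(p)$ of $\mathbb{Q}$; $p'\supseteq p$ means $p'$ extends $p$; $p|_I$ is the restriction of $p$ to $I\cap\mathrm{dom}(p)$; $\mathrm{Fix}(p)=\{c\in\mathrm{dom}(p):p(c)=c\}$. An open interval $(a,b)$ is $p$-increasing if $a,b\in\mathrm{dom}(p)$, $p(a)=a$, $p(b)=b$ and $p(c)>c$ for all $c\in\mathrm{dom}(p)\cap(a,b)$; $p$-decreasing likewise with $p(c)<c$; $p$-monotone means either. Writing $\mathrm{dom}(p)=\{a_0<\dots<a_n\}$, $p$ is informative if $p(a_0)=a_0$, $p(a_n)=a_n$ and there are indices $0=i_0<\dots<i_r=n$ with $p(a_{i_k})=a_{i_k}$ and each $(a_{i_k},a_{i_{k+1}})$ $p$-monotone;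 then $\mathrm{Ess}(p)=(\mathrm{dom}(p)\cup\mathrm{ran}(p))\setminus\{a_0,a_n\}$. A pair $(p,q)$ is piecewise elementary if $p,q$ are informative, $\min\mathrm{dom}(p)=\min\mathrm{dom}(q)$ and $\max\mathrm{dom}(p)=\max\mathrm{dom}(q)$; it is elementary if moreover $\mathrm{Fix}(p)\cap\mathrm{Fix}(q)$ consists only of this min and max. Words: $F(s,t)$ free group; for reduced $w=t^{n_k}s^{m_k}\cdots t^{n_1}s^{m_1}$, $w(p,q)(c)=q^{n_k}p^{m_k}\cdots q^{n_1}p^{m_1}(c)$ when defined (rightmost letter acts first); ''$w=t^nv$'' means the product is reduced. Liberation for elementary pairs: a triple $(p',q',w)$ with $p'\supseteq p$, $q'\supseteq q$ partial isomorphisms and $w$ reduced liberates $p$ in $(p,q)$ if: (i) $p',q'$ are informative; (ii) $\min\mathrm{dom}(p')=\min\mathrm{dom}(p)$, $\min\mathrm{dom}(q')=\min\mathrm{dom}(q)$, $\max\mathrm{dom}(p')=\max\mathrm{dom}(p)$, $\max\mathrm{dom}(q')=\max\mathrm{dom}(q)$; (iii) $w=t^nv$ with $n\neq0$; (iv) $w(p',q')(c)$ is defined for all $c\in\mathrm{Ess}(p)\cup\mathrm{Ess}(q)$ and $w(p',q')(\min(\mathrm{Ess}(p)\cup\mathrm{Ess}(q)))>\max\mathrm{Ess}(p')$; (v) there is an open interval $J$ whose right endpoint is $\max\mathrm{dom}(q)$, with $w(p',q')(c)\in J$ for all $c\in\mathrm{Ess}(p)\cup\mathrm{Ess}(q)$,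 and $J$ is $q'$-increasing if $n>0$ and $q'$-decreasing if $n<0$. It liberates $q$ if the same holds with roles of $p,q$ and of $s,t$ interchanged. Liberation for piecewise elementary pairs: let $a_0<\dots<a_m$ enumerate $\mathrm{Fix}(p)\cap\mathrm{Fix}(q)$ and $I_j=[a_j,a_{j+1}]$ (so each $(p|_{I_j},q|_{I_j})$ is elementary); $(p',q',w)$ liberates $p$ [resp. $q$] in $(p,q)$ if the min/max conditions (ii) hold and for every $j<m$ the triple $(p'|_{I_j},q'|_{I_j},w)$ liberates $p|_{I_j}$ [resp. $q|_{I_j}$] in $(p|_{I_j},q|_{I_j})$. *)

(* Defs.v *)
From HB Require Import structures.
From mathcomp Require Import all_boot all_order all_algebra.
Set Implicit Arguments. Unset Strict Implicit. Unset Printing Implicit Defensive.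
Import Order.TTheory GRing.Theory Num.Theory.
Local Open Scope ring_scope.

(* A finite partial map on Q, given by its graph (list of pairs (x, p x)). *)
Definition piso := seq (rat * rat).

Definition pdom (p : piso) : seq rat := map fst p.
Definition pran (p : piso) : seq rat := map snd p.

(* p is a partial isomorphism: an order-preserving bijection dom p -> ran p
   (the order condition also forces functionality and injectivity). *)
Definition is_piso (p : piso) : Prop :=
  uniq (pdom p) /\
  forall x y, x \in p -> y \in p -> (x.1 < y.1) = (x.2 < y.2).

Fixpoint papp (p : piso) (c : rat) : option rat :=
  match p with
  | [::] => None
  | x :: p' => if x.1 == c then Some x.2 else papp p' c
  end.

Definition pinv (p : piso) : piso := map (fun x => (x.2, x.1)) p.

Definition extends (p' p : piso) : Prop := {subset p <= p'}.

Definition restrict (p : piso) (a b : rat) : piso :=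
  [seq x <- p | (a <= x.1) && (x.1 <= b)].

Definition pfix (p : piso) : seq rat := [seq x.1 | x <- p & x.1 == x.2].

Definition smin (s : seq rat) : rat := foldr Order.min (head 0 s) s.
Definition smax (s : seq rat) : rat := foldr Order.max (head 0 s) s.

Definition p_increasing (p : piso) (a b : rat) : Prop :=
  [/\ a \in pdom p, b \in pdom p, papp p a = Some a, papp p b = Some b &
      forall c y, (c, y) \in p -> a < c < b -> c < y].
Definition p_decreasing (p : piso) (a b : rat) : Prop :=
  [/\ a \in pdom p, b \in pdom p, papp p a = Some a, papp p b = Some b &
      forall c y, (c, y) \in p -> a < c < b -> y < c].
Definition p_monotone (p : piso) (a b : rat) : Prop :=
  p_increasing p a b \/ p_decreasing p a b.

Definition informative (p : piso) : Prop :=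
  exists F : seq rat,
    [/\ F != [::],
        head 0 F = smin (pdom p),
        last 0 F = smax (pdom p),
        sorted (fun x y : rat => x < y) F /\ all (fun c => c \in pfix p) F &
        forall k, (k.+1 < size F)%N -> p_monotone p (nth 0 F k) (nth 0 F k.+1)].

Definition Ess (p : piso) : seq rat :=
  [seq c <- pdom p ++ pran p | (c != smin (pdom p)) && (c != smax (pdom p))].

Definition pw_elementary (p q : piso) : Prop :=
  [/\ informative p, informative q,
      smin (pdom p) = smin (pdom q) & smax (pdom p) = smax (pdom q)].

Inductive letter := LS | LSi | LT | LTi.

Definition inv_pair (x y : letter) : bool :=
  match x, y with
  | LS, LSi | LSi, LS | LT, LTi | LTi, LT => true
  | _, _ => false
  end.

(* a word is a list of letters, leftmost letter first *)
Fixpoint reduced (w : seq letter) : bool :=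
  match w with
  | x :: ((y :: _) as w') => ~~ inv_pair x y && reduced w'
  | _ => true
  end.

Definition act (p q : piso) (l : letter) (c : rat) : option rat :=
  match l with
  | LS => papp p c
  | LSi => papp (pinv p) c
  | LT => papp q c
  | LTi => papp (pinv q) c
  end.

(* w(p,q)(c): the rightmost letter acts first *)
Definition weval (p q : piso) (w : seq letter) (c : rat) : option rat :=
  foldr (fun l acc => obind (act p q l) acc) (Some c) w.

(* w = t^n v (reduced) with n <> 0 *)
Definition starts_t (w : seq letter) : bool :=
  match w with LT :: _ | LTi :: _ => true | _ => false end.

Definition swap_letter (l : letter) : letter :=
  match l with LS => LT | LSi => LTi | LT => LS | LTi => LSi end.

Definition lib_p_el (p q p' q' : piso) (w : seq letter) : Prop :=
  let E := Ess p ++ Ess q in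
  [/\ is_piso p' /\ is_piso q' /\ extends p' p /\ extends q' q /\ reduced w,
      informative p' /\ informative q',
      smin (pdom p') = smin (pdom p) /\ smin (pdom q') = smin (pdom q) /\
                 smax (pdom p') = smax (pdom p) /\ smax (pdom q') = smax (pdom q),
      starts_t w &
      (( (forall c, c \in E -> weval p' q' w c != None) /\
                 (forall m, m \in E -> (forall c, c \in E -> m <= c) ->
                    forall y, weval p' q' w m = Some y ->
                    forall x, x \in Ess p' -> x < y)) /\
      (exists a, a < smax (pdom q) /\
                 (forall c y, c \in E -> weval p' q' w c = Some y ->
                    a < y < smax (pdom q)) /\
                 match w with
                 | LT :: _ => p_increasing q' a (smax (pdom q))
                 | LTi :: _ => p_decreasing q' a (smax (pdom q))
                 | _ => False
                 end))].

Definition common_fix (p q : piso) : seq rat :=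
  sort (fun x y : rat => x <= y) (undup [seq c <- pfix p | c \in pfix q]).

Definition lib_p (p q p' q' : piso) (w : seq letter) : Prop :=
  let A := common_fix p q in
  [/\ is_piso p' /\ is_piso q' /\ extends p' p /\ extends q' q /\ reduced w,
      smin (pdom p') = smin (pdom p), smin (pdom q') = smin (pdom q),
      smax (pdom p') = smax (pdom p) /\ smax (pdom q') = smax (pdom q) &
      forall j, (j.+1 < size A)%N ->
        let a := nth 0 A j in let b := nth 0 A j.+1 in
        lib_p_el (restrict p a b) (restrict q a b)
                 (restrict p' a b) (restrict q' a b) w].

Definition lib_q (p q p' q' : piso) (w : seq letter) : Prop :=
  lib_p q p q' p' (map swap_letter w).

Definition starts_s (w : seq letter) : bool :=
  match w with LS :: _ | LSi :: _ => true | _ => false end.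

(* Main.v *)
Require Import Defs.
From mathcomp Require Import all_boot all_order all_algebra.
Set Implicit Arguments. Unset Strict Implicit. Unset Printing Implicit Defensive.
Import Order.TTheory GRing.Theory Num.Theory.
Local Open Scope ring_scope.

Lemma foldr_min_le (d : rat) s : (foldr Order.min d s <= d) /\ forall x, x \in s -> foldr Order.min d s <= x.
Proof.
elim: s => [|y s [IH1 IH2]] /=; first by split.
split; first by rewrite ge_min IH1 orbT.
move=> x; rewrite in_cons => /orP[/eqP->|xs]; first by rewrite ge_min lexx.
by rewrite ge_min IH2 ?orbT.
Qed.

Lemma foldr_min_mem (d : rat) s : foldr Order.min d s \in d :: s.
Proof.
elim: s => [|y s IH] /=; first by rewrite mem_head.
rewrite /Order.min; case: ifP => _; first by rewrite !in_cons eqxx orbT.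
move: IH; rewrite !in_cons => /orP[->|->]; by rewrite ?orbT.
Qed.

Lemma smin_mem s : s != [::] -> smin s \in s.
Proof.
case: s => [//|y s] _; rewrite /smin /=.
have := foldr_min_mem y (y :: s); rewrite /= !in_cons.
by case/orP=> [->//|]; rewrite ?orbT.
Qed.

Lemma smin_le s x : x \in s -> smin s <= x.
Proof. by move=> xs; rewrite /smin; have [_ ->] := foldr_min_le (head 0 s) s. Qed.

Lemma smin_eq s m : m \in s -> (forall x, x \in s -> m <= x) -> smin s = m.
Proof.
move=> ms H; apply/le_anti; rewrite smin_le //= H //.
by apply: smin_mem; apply/eqP=> s0; rewrite s0 in ms.
Qed.

Lemma foldr_max_ge (d : rat) s : (d <= foldr Order.max d s) /\ forall x, x \in s -> x <= foldr Order.max d s.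
Proof.
elim: s => [|y s [IH1 IH2]] /=; first by split.
split; first by rewrite le_max IH1 orbT.
move=> x; rewrite in_cons => /orP[/eqP->|xs]; first by rewrite le_max lexx.
by rewrite le_max IH2 ?orbT.
Qed.

Lemma foldr_max_mem (d : rat) s : foldr Order.max d s \in d :: s.
Proof.
elim: s => [|y s IH] /=; first by rewrite mem_head.
rewrite /Order.max; case: ifP => _; last by rewrite !in_cons eqxx orbT.
move: IH; rewrite !in_cons => /orP[->|->]; by rewrite ?orbT.
Qed.

Lemma smax_mem s : s != [::] -> smax s \in s.
Proof.
case: s => [//|y s] _; rewrite /smax /=.
have := foldr_max_mem y (y :: s); rewrite /= !in_cons.
by case/orP=> [->//|]; rewrite ?orbT.
Qed.

Lemma smax_ge s x : x \in s -> x <= smax s.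
Proof. by move=> xs; rewrite /smax; have [_ ->] := foldr_max_ge (head 0 s) s. Qed.

Lemma smax_eq s m : m \in s -> (forall x, x \in s -> x <= m) -> smax s = m.
Proof.
move=> ms H; apply/le_anti; rewrite smax_ge // andbT H //.
by apply: smax_mem; apply/eqP=> s0; rewrite s0 in ms.
Qed.

Lemma piso_ord (A : piso) x y : is_piso A -> x \in A -> y \in A -> (x.1 < y.1) = (x.2 < y.2).
Proof. by case=> _ H; apply: H. Qed.

Lemma piso_fun (A : piso) c y y' : is_piso A -> (c, y) \in A -> (c, y') \in A -> y = y'.
Proof.
move=> PA H1 H2; have e1 := piso_ord PA H1 H2; have e2 := piso_ord PA H2 H1.
rewrite /= ltxx in e1 e2; case: (ltgtP y y') e1 e2 => //.
Qed.

Lemma piso_inj (A : piso) c c' y : is_piso A -> (c, y) \in A -> (c', y) \in A -> c = c'.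
Proof.
move=> PA H1 H2; have e1 := piso_ord PA H1 H2; have e2 := piso_ord PA H2 H1.
rewrite /= ltxx in e1 e2; case: (ltgtP c c') e1 e2 => //.
Qed.

Lemma papp_mem (A : piso) c y : papp A c = Some y -> (c, y) \in A.
Proof.
elim: A => [//|[c0 y0] A IH] /=; case: (c0 =P c) => [e|_ H].
  by case=> e'; rewrite -e -e' mem_head.
by rewrite in_cons (IH H) orbT.
Qed.

Lemma papp_in (A : piso) c y : (forall z, (c, z) \in A -> z = y) -> (c, y) \in A -> papp A c = Some y.
Proof.
elim: A => [//|[c0 y0] A IH] H /=.
case: (c0 =P c) => [e _|ne].
  by rewrite e in H; rewrite (H y0) // mem_head.
rewrite in_cons => /orP[/eqP[e1 _]|]; first by case: ne; rewrite e1.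
apply: IH => z zA.
by apply: H; rewrite in_cons zA orbT.
Qed.

Lemma papp_piso (A : piso) c y : is_piso A -> (c, y) \in A -> papp A c = Some y.
Proof. move=> PA H; apply: papp_in (H) => z zA; exact: piso_fun PA zA H. Qed.

Lemma mem_pinv (A : piso) x y : ((x, y) \in pinv A) = ((y, x) \in A).
Proof.
elim: A => [//|[c z] A IH] /=; rewrite !in_cons IH; congr (_ || _).
by apply/eqP/eqP => [[-> ->]|[-> ->]].
Qed.

Lemma pinv_pinv (A : piso) : pinv (pinv A) = A.
Proof. by elim: A => [//|[c z] A IH] /=; rewrite IH. Qed.

Lemma pinv_cat (A B : piso) : pinv (A ++ B) = pinv A ++ pinv B.
Proof. exact: map_cat. Qed.

Lemma pdom_pinv (A : piso) : pdom (pinv A) = pran A.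
Proof. by elim: A => [//|[c z] A IH] /=; rewrite IH. Qed.

Lemma pran_pinv (A : piso) : pran (pinv A) = pdom A.
Proof. by elim: A => [//|[c z] A IH] /=; rewrite IH. Qed.

Lemma piso_pinv (A : piso) : is_piso A -> is_piso (pinv A).
Proof.
move=> PA; split.
  rewrite pdom_pinv /pran map_inj_in_uniq.
    by case: PA => u _; move: u; rewrite /pdom => /map_uniq.
  move=> [c y] [c' y'] H1 H2 /= e; rewrite e in H1.
  by rewrite (piso_inj PA H1 H2) e.
move=> [x1 x2] [y1 y2]; rewrite !mem_pinv /= => H1 H2.
by rewrite (piso_ord PA H1 H2).
Qed.

Lemma piso_filter (A : piso) (P : pred (rat * rat)) : is_piso A -> is_piso (filter P A).
Proof.
move=> [u H]; split.
  by apply: subseq_uniq u; apply: map_subseq; apply: filter_subseq.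
move=> x y; rewrite !mem_filter => /andP[_ ?] /andP[_ ?]; exact: H.
Qed.

Lemma mem_pdom (A : piso) c : (c \in pdom A) = has (fun x => x.1 == c) A.
Proof. by elim: A => [//|x A IH] /=; rewrite in_cons IH eq_sym. Qed.

Lemma pdomP (A : piso) c : reflect (exists y, (c, y) \in A) (c \in pdom A).
Proof.
rewrite mem_pdom; apply: (iffP hasP) => [[[c' y] H /= /eqP e]|[y H]].
  by exists y; rewrite -e.
by exists (c, y).
Qed.

Lemma pranP (A : piso) y : reflect (exists c, (c, y) \in A) (y \in pran A).
Proof.
rewrite -pdom_pinv; apply: (iffP (pdomP _ _)) => [[c H]|[c H]]; exists c;
  by rewrite ?mem_pinv in H *.
Qed.

Lemma piso_add (A : piso) c z : is_piso A -> c \notin pdom A ->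
  (forall x, x \in A -> (x.1 < c) = (x.2 < z) /\ (c < x.1) = (z < x.2)) ->
  is_piso ((c, z) :: A).
Proof.
move=> [u H] nc Hx; split; first by rewrite /= nc.
move=> x y; rewrite !in_cons => /orP[/eqP->|xA] /orP[/eqP->|yA] //=.
- by rewrite !ltxx.
- by case: (Hx y yA).
- by case: (Hx x xA).
- exact: H.
Qed.

Lemma piso_fix_lt (A : piso) f x : is_piso A -> (f, f) \in A -> x \in A ->
  ((x.1 < f) = (x.2 < f)) /\ ((f < x.1) = (f < x.2)).
Proof.
move=> PA Hf Hx; split; first exact: (piso_ord PA Hx Hf).
exact: (piso_ord PA Hf Hx).
Qed.

Lemma piso_fix_eq (A : piso) f y : is_piso A -> (f, f) \in A -> ((f, y) \in A \/ (y, f) \in A) -> y = f.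
Proof.
move=> PA Hf [H|H]; [exact: piso_fun PA H Hf| exact: piso_inj PA H Hf].
Qed.

Definition orient (d : bool) (A : piso) : piso := if d then A else pinv A.
Definition posl (l : letter) : bool := match l with LS | LT => true | _ => false end.
Definition isS (l : letter) : bool := match l with LS | LSi => true | _ => false end.
Definition Mmap (P Q : piso) (l : letter) := if isS l then P else Q.
Definition Omap (P Q : piso) (l : letter) := if isS l then Q else P.

Lemma act_eq P Q l c : act P Q l c = papp (orient (posl l) (Mmap P Q l)) c.
Proof. by case: l. Qed.

Lemma orient_orient d A : orient d (orient d A) = A.
Proof. by case: d => //=; rewrite pinv_pinv. Qed.

Lemma orient_cat d A B : orient d (A ++ B) = orient d A ++ orient d B.
Proof. by case: d => //=; rewrite pinv_cat. Qed.

Lemma piso_orient d A : is_piso A -> is_piso (orient d A).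
Proof. by case: d => //=; apply: piso_pinv. Qed.

Lemma piso_orientK d A : is_piso (orient d A) -> is_piso A.
Proof. by move/(piso_orient d); rewrite orient_orient. Qed.

Lemma mem_orient d A x : (x \in orient d A) = (if d then x \in A else (x.2, x.1) \in A).
Proof. by case: d => //=; case: x => x1 x2; rewrite mem_pinv. Qed.

Lemma orient_sub d A B : {subset A <= B} -> {subset orient d A <= orient d B}.
Proof. by move=> H x; rewrite !mem_orient; case: d => /=; apply: H. Qed.

Lemma weval_cons P Q l v c : weval P Q (l :: v) c = obind (act P Q l) (weval P Q v c).
Proof. by []. Qed.

Lemma weval_cat P Q u w c : weval P Q (u ++ w) c = obind (weval P Q u) (weval P Q w c).
Proof.
elim: u => [|l u IH] /=; first by case: (weval P Q w c).
rewrite IH; case: (weval P Q w c) => //=.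
Qed.

Lemma weval_ext P Q P' Q' v c y : is_piso P' -> is_piso Q' ->
  {subset P <= P'} -> {subset Q <= Q'} -> weval P Q v c = Some y -> weval P' Q' v c = Some y.
Proof.
move=> PP PQ sP sQ; elim: v y => [//|l v IH] y.
rewrite !weval_cons; case E: (weval P Q v c) => [y0|//] /=.
rewrite (IH y0 E) /= !act_eq => H; apply: papp_piso.
  by rewrite /Mmap; case: ifP => _; apply: piso_orient.
apply: (orient_sub (d := posl l) (A := Mmap P Q l)); last exact: papp_mem.
by rewrite /Mmap; case: ifP.
Qed.

Lemma weval_mono P Q v c c' y y' : is_piso P -> is_piso Q ->
  weval P Q v c = Some y -> weval P Q v c' = Some y' -> c < c' -> y < y'.
Proof.
move=> PP PQ; elim: v y y' => [|l v IH] y y' /=; first by move=> [<-] [<-].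
case E: (weval P Q v c) => [y0|//]; case E': (weval P Q v c') => [y0'|//] /=.
rewrite !act_eq => H1 H2 lt; have lt0 := IH _ _ E E' lt.
have PR : is_piso (orient (posl l) (Mmap P Q l)).
  by rewrite /Mmap; case: ifP => _; apply: piso_orient.
by rewrite -(piso_ord PR (papp_mem H1) (papp_mem H2)).
Qed.

Lemma smax_lt s t : s != [::] -> (forall x, x \in s -> x < t) -> smax s < t.
Proof. by move=> ne H; apply: H; apply: smax_mem. Qed.

Lemma smin_gt s t : s != [::] -> (forall x, x \in s -> t < x) -> t < smin s.
Proof. by move=> ne H; apply: H; apply: smin_mem. Qed.

Lemma ext1 (R : piso) y K : is_piso R ->
  (forall x, x \in R -> y <= x.1 -> K < x.2 /\ y < x.2) ->
  exists z N, [/\ N = [::] \/ N = [:: (y, z)], is_piso (N ++ R), (y, z) \in N ++ R,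
                  K < z & y < z].
Proof.
move=> PR H.
case: (boolP (y \in pdom R)) => [/pdomP[z yz]|ny].
  have [H1 H2] := H _ yz (lexx _).
  by exists z, [::]; split=> //; left.
set Ls := y :: K :: [seq x.2 | x <- R & x.1 < y].
set Us := [seq x.2 | x <- R & y < x.1].
have LU : forall l u, l \in Ls -> u \in Us -> l < u.
  move=> l u; rewrite /Ls /Us !in_cons => Hl /mapP[x2 + ->].
  rewrite mem_filter => /andP[yx x2R].
  have [H1 H2] := H _ x2R (ltW yx).
  case/orP: Hl => [/eqP->//|/orP[/eqP->//|/mapP[x1 + ->]]].
  rewrite mem_filter => /andP[x1y x1R].
  by rewrite -(piso_ord PR x1R x2R) (lt_trans x1y yx).
set L := smax Ls.
have Lup : forall l, l \in Ls -> l <= L by move=> l; apply: smax_ge.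
pose z := if Us is u :: _ then (L + smin Us) / 2 else L + 1.
have zL : L < z.
  rewrite /z; case E: Us => [|u s]; first by rewrite ltrDl ltr01.
  have := (midf_lt (x := L) (y := smin (u :: s))).
  rewrite -E; case=> // ; apply: smin_gt; first by rewrite E.
  move=> v vU; apply: smax_lt => // l lL; exact: LU.
have zU : forall u, u \in Us -> z < u.
  rewrite /z; case E: Us => [//|u0 s] u uU; rewrite -E.
  apply: (lt_le_trans (y := smin Us)); last by apply: smin_le; rewrite E.
  have := (midf_lt (x := L) (y := smin Us)); case=> //.
  apply: smin_gt; first by rewrite E.
  move=> v vU; apply: smax_lt => // l lL; exact: LU.
exists z, [:: (y, z)]; split; first by right.
- apply: piso_add => // x xR.
  case: (ltgtP x.1 y) => [x1y|yx1|e].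
  + have : x.2 \in Ls by rewrite !in_cons; apply/orP; right; apply/orP; right;
      apply/mapP; exists x => //; rewrite mem_filter x1y.
    move/Lup => le; split; first by rewrite (le_lt_trans le zL).
    apply/esym/negbTE; rewrite -leNgt; apply: ltW; exact: le_lt_trans le zL.
  + have : x.2 \in Us by apply/mapP; exists x => //; rewrite mem_filter yx1.
    move/zU => lt; split; last by [].
    by apply/esym/negbTE; rewrite -leNgt; apply: ltW.
  + by case/negP: ny; rewrite -e; apply/pdomP; exists x.2; case: x xR e.
- by rewrite mem_head.
- by apply: le_lt_trans zL; apply: Lup; rewrite !in_cons eqxx orbT.
- by apply: le_lt_trans zL; apply: Lup; rewrite mem_head.
Qed.

Lemma ext_list (T : seq (rat * rat)) (R : piso) : is_piso R ->
  (forall t x, t \in T -> x \in R -> t.1 <= x.1 -> t.2 < x.2 /\ t.1 < x.2) ->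
  (forall t t', t \in T -> t' \in T -> t.1 <= t'.1 -> t.2 <= t'.2 \/ t.2 < t'.1) ->
  exists N, [/\ is_piso (N ++ R),
    (forall x, x \in N -> exists2 t, t \in T & [/\ x.1 = t.1, t.2 < x.2 & t.1 < x.2]) &
    (forall t, t \in T -> exists z, [/\ (t.1, z) \in N ++ R, t.2 < z & t.1 < z])].
Proof.
move=> PR; elim: T => [|t T IH] HR HT.
  by exists [::]; split=> // x.
have [||N [PN HN1 HN2]] := IH.
- by move=> t0 x t0T; apply: HR; rewrite in_cons t0T orbT.
- by move=> t0 t1 t0T t1T; apply: HT; rewrite in_cons ?t0T ?t1T orbT.
have tT : t \in t :: T by rewrite mem_head.
have [|z [Nt [eN PNt mz Kz yz]]] := ext1 (y := t.1) (K := t.2) PN.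
  move=> x; rewrite mem_cat => /orP[xN|xR] le; last exact: HR.
  have [t' t'T [e1 e2 e3]] := HN1 _ xN.
  have t'T' : t' \in t :: T by rewrite in_cons t'T orbT.
  rewrite e1 in le; split; last exact: le_lt_trans le e3.
  case: (HT _ _ tT t'T' le) => [le2|lt2]; first exact: le_lt_trans le2 e2.
  exact: lt_trans lt2 e3.
exists (Nt ++ N); rewrite -catA; split => //.
- move=> x; rewrite mem_cat => /orP[xNt|xN].
    exists t => //; case: eN xNt => ->; rewrite ?in_nil // mem_seq1 => /eqP->.
    by split.
  by have [t' t'T H] := HN1 _ xN; exists t' => //; rewrite in_cons t'T orbT.
- move=> t0; rewrite in_cons => /orP[/eqP->|t0T]; first by exists z.
  have [z0 [m1 m2 m3]] := HN2 _ t0T; exists z0; split => //.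
  by rewrite mem_cat m1 orbT.
Qed.

Lemma sorted_lt_nth (F : seq rat) i j : sorted (fun x y : rat => x < y) F ->
  (i < size F)%N -> (j < size F)%N -> (i < j)%N -> nth 0 F i < nth 0 F j.
Proof.
move=> sF iF jF ij.
by apply: (sorted_ltn_nth (leT := fun x y : rat => x < y) (@lt_trans _ _) 0 sF).
Qed.

Lemma sorted_le_nth (F : seq rat) i j : sorted (fun x y : rat => x < y) F ->
  (i < size F)%N -> (j < size F)%N -> (i <= j)%N -> nth 0 F i <= nth 0 F j.
Proof.
move=> sF iF jF; rewrite leq_eqVlt => /orP[/eqP->//|ij].
by apply: ltW; apply: sorted_lt_nth.
Qed.

Lemma mem_pfix (A : piso) c : (c \in pfix A) = ((c, c) \in A).
Proof.
apply/mapP/idP => [[[x1 x2]]|H]; last by exists (c, c); rewrite // mem_filter eqxx.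
by rewrite mem_filter /= => /andP[/eqP-> H] ->.
Qed.

Definition sgn_opp (x y : rat * rat) : bool :=
  (x.1 < x.2) && (y.2 < y.1) || (x.2 < x.1) && (y.1 < y.2).

Definition Inf2 (A : piso) : Prop :=
  [/\ smin (pdom A) \in pfix A, smax (pdom A) \in pfix A &
   forall x y, x \in A -> y \in A -> x.1 < y.1 -> sgn_opp x y ->
     exists2 z, z \in A & (z.1 == z.2) && (x.1 < z.1 < y.1)].

Lemma sgn_fix1 x y : x.1 = x.2 -> sgn_opp x y = false.
Proof. by move=> e; rewrite /sgn_opp e ltxx. Qed.
Lemma sgn_fix2 x y : y.1 = y.2 -> sgn_opp x y = false.
Proof. by move=> e; rewrite /sgn_opp e ltxx !andbF. Qed.
Lemma sgn_same (d : bool) x y :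
  (if d then x.1 < x.2 else x.2 < x.1) -> (if d then y.1 < y.2 else y.2 < y.1) -> sgn_opp x y = false.
Proof.
rewrite /sgn_opp; case: d => H1 H2.
  by rewrite H1 (lt_gtF H2) (lt_gtF H1).
by rewrite H2 (lt_gtF H1) (lt_gtF H2) /= andbF.
Qed.

Lemma mono_same (A : piso) f0 f1 x y : p_monotone A f0 f1 -> x \in A -> y \in A ->
  f0 < x.1 < f1 -> f0 < y.1 < f1 -> sgn_opp x y = false.
Proof.
case: x => x1 x2; case: y => y1 y2 /=.
case=> -[_ _ _ _ H] xA yA hx hy.
  by apply: (@sgn_same true (x1, x2) (y1, y2)); [apply: H xA hx | apply: H yA hy].
by apply: (@sgn_same false (x1, x2) (y1, y2)); [apply: H xA hx | apply: H yA hy].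
Qed.

Lemma inf_aux (A : piso) F : is_piso A ->
  sorted (fun x y : rat => x < y) F -> all (fun c => c \in pfix A) F ->
  (forall k, (k.+1 < size F)%N -> p_monotone A (nth 0 F k) (nth 0 F k.+1)) ->
  forall x y, x \in A -> y \in A -> head 0 F <= x.1 -> y.1 <= last 0 F -> x.1 < y.1 ->
  sgn_opp x y -> exists2 z, z \in A & (z.1 == z.2) && (x.1 < z.1 < y.1).
Proof.
move=> PA; elim: F => [|f0 F IH] sF aF mF x y xA yA hx ly xy sg.
  by move: (le_lt_trans hx (lt_le_trans xy ly)); rewrite ltxx.
case: F IH sF aF mF hx ly => [|f1 F] IH sF aF mF hx ly.
  by move: (le_lt_trans hx (lt_le_trans xy ly)); rewrite ltxx.
move: aF => /= /and3P[f0P f1P aF].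
rewrite mem_pfix in f0P; rewrite mem_pfix in f1P.
case: (ltP x.1 f1) => [x1f1|f1x1]; last first.
  apply: (IH _ _ _ _ _ xA yA) => //.
  - by move: sF => /= /andP[].
  - by rewrite /= mem_pfix f1P.
  - by move=> k kF; apply: (mF k.+1).
case: (ltgtP y.1 f1) => [y1f1|f1y1|ey].
-
  move: hx; rewrite /= le_eqVlt => /orP[/eqP ex|f0x1]; last first.
    have f0y : f0 < y.1 by apply: lt_trans xy.
    by rewrite (mono_same (mF 0%N isT) xA yA) ?f0x1 ?x1f1 ?f0y ?y1f1 in sg.
  have : x.2 = x.1.
    by apply: (piso_fun PA (c := x.1)); [case: x xA {ex xy sg x1f1}| rewrite -ex].
  by move=> e; rewrite sgn_fix1 in sg.
- by exists (f1, f1) => //=; rewrite eqxx x1f1 f1y1.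
- have : y.2 = y.1.
    by apply: (piso_fun PA (c := y.1)); [case: y yA {ey xy sg ly}| rewrite ey].
  by move=> e; rewrite sgn_fix2 in sg.
Qed.

Lemma mem_last0 (F : seq rat) : F != [::] -> last 0 F \in F.
Proof. by case: F => // f F _; rewrite /= mem_last. Qed.

Lemma mem_head0 (F : seq rat) : F != [::] -> head 0 F \in F.
Proof. by case: F => // f F _; rewrite /= mem_head. Qed.

Lemma inf_Inf2 (A : piso) : is_piso A -> informative A -> Inf2 A.
Proof.
move=> PA [F [nF hF lF [sF aF] mF]]; split.
- by rewrite -hF; apply: (allP aF); apply: mem_head0.
- by rewrite -lF; apply: (allP aF); apply: mem_last0.
move=> x y xA yA; apply: (inf_aux PA sF aF mF xA yA).
- by rewrite hF; apply: smin_le; apply/pdomP; exists x.2; case: x xA.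
- by rewrite lF; apply: smax_ge; apply/pdomP; exists y.2; case: y yA.
Qed.

Lemma fix_pdom (A : piso) c : c \in pfix A -> c \in pdom A.
Proof. by rewrite mem_pfix => H; apply/pdomP; exists c. Qed.

Lemma Inf2_inf (A : piso) : is_piso A -> Inf2 A -> informative A.
Proof.
move=> PA [m1 m2 H].
set F := sort <=%O (undup (pfix A)).
have memF c : (c \in F) = (c \in pfix A) by rewrite mem_sort mem_undup.
have sF : sorted (fun x y : rat => x < y) F.
  have := lt_sorted_uniq_le F; rewrite /= => ->.
  by rewrite sort_uniq undup_uniq sort_sorted //; apply: le_total.
have nF : F != [::] by apply/eqP => e; move: m1; rewrite -memF e.
have allF : forall c, c \in F -> smin (pdom A) <= c /\ c <= smax (pdom A).
  by move=> c; rewrite memF => /fix_pdom cA; rewrite smin_le ?smax_ge.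
have idx : forall c, c \in F -> exists2 i, (i < size F)%N & nth 0 F i = c.
  by move=> c cF; exists (index c F); rewrite ?index_mem ?nth_index.
have sz : (0 < size F)%N by case: (F) nF.
exists F; split => //.
- apply/le_anti; rewrite (proj1 (allF _ (mem_head0 nF))) andbT.
  have [i iF <-] := idx (smin (pdom A)) (etrans (memF _) m1).
  by rewrite -nth0; apply: sorted_le_nth.
- apply/le_anti; rewrite (proj2 (allF _ (mem_last0 nF))) /=.
  have [i iF <-] := idx (smax (pdom A)) (etrans (memF _) m2).
  rewrite -nth_last; apply: sorted_le_nth => //; first by rewrite prednK.
  by rewrite -ltnS prednK.
- by split => //; apply/allP => c; rewrite memF.
move=> k kF.
have kF' : (k < size F)%N by apply: ltnW.
set f0 := nth 0 F k; set f1 := nth 0 F k.+1.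
have f01 : f0 < f1 by apply: sorted_lt_nth.
have f0A : (f0, f0) \in A by rewrite -mem_pfix -memF mem_nth.
have f1A : (f1, f1) \in A by rewrite -mem_pfix -memF mem_nth.
have nofix : forall z, z \in A -> z.1 = z.2 -> f0 < z.1 < f1 -> False.
  move=> [z1 z2] zA /= e; rewrite -e in zA.
  have : z1 \in F by rewrite memF mem_pfix.
  move=> /idx [i iF ei]; rewrite -ei /f0 /f1 => /andP[lt1 lt2].
  case: (ltnP k i) => ki.
    by move: lt2; rewrite ltNge sorted_le_nth.
  by move: lt1; rewrite ltNge sorted_le_nth.
have dom0 : f0 \in pdom A by apply/pdomP; exists f0.
have dom1 : f1 \in pdom A by apply/pdomP; exists f1.
have pa0 := papp_piso PA f0A; have pa1 := papp_piso PA f1A.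
case: (boolP (has (fun x => (f0 < x.1 < f1) && (x.1 < x.2)) A)) => [/hasP[x xA /andP[xI xinc]]|hn].
  left; split => // c y cyA cI.
  case: (ltgtP c y) => // [ylt|e]; last first.
    by case: (nofix _ cyA e cI).
  case: (ltgtP x.1 c) => [xc|cx|e].
  - have [z zA /andP[/eqP ez /andP[z1 z2]]] := H _ _ xA cyA xc (introT orP (or_introl (introT andP (conj xinc ylt)))).
    exfalso; apply: (nofix _ zA ez); move: xI cI => /andP[a1 _] /andP[_ a2].
    by rewrite (lt_trans a1 z1) (lt_trans z2 a2).
  - have [z zA /andP[/eqP ez /andP[z1 z2]]] := H _ _ cyA xA cx (introT orP (or_intror (introT andP (conj ylt xinc)))).
    exfalso; apply: (nofix _ zA ez); move: xI cI => /andP[_ a1] /andP[a2 _].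
    by rewrite (lt_trans a2 z1) (lt_trans z2 a1).
  - have : x = (c, y).
      by case: x xA e {xI xinc} => x1 x2 xA /= e; rewrite e in xA *; rewrite (piso_fun PA cyA xA).
    by move=> ex; rewrite ex /= in xinc; move: (lt_trans xinc ylt); rewrite ltxx.
right; split => // c y cyA cI.
have : ~~ ((f0 < c < f1) && (c < y)) by apply: (hasPn hn (c, y)).
rewrite cI /= -leNgt le_eqVlt => /orP[/eqP e|//].
by case: (nofix _ cyA (esym e) cI).
Qed.

Lemma Inf2_ext (A N : piso) f b (d : bool) : Inf2 A -> is_piso (N ++ A) ->
  smin (pdom (N ++ A)) = smin (pdom A) -> smax (pdom (N ++ A)) = smax (pdom A) ->
  f < b -> (f, f) \in N ++ A -> (b, b) \in N ++ A ->
  (forall x, x \in N -> x.1 = x.2 \/ f < x.1 < b) ->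
  (forall x, x \in N ++ A -> f < x.1 < b -> if d then x.1 < x.2 else x.2 < x.1) ->
  Inf2 (N ++ A).
Proof.
move=> [m1 m2 H] PNA e1 e2 fb fF bF HN Hd.
have sub : {subset A <= N ++ A} by move=> x xA; rewrite mem_cat xA orbT.
split.
- by rewrite e1 mem_pfix; apply: sub; rewrite -mem_pfix.
- by rewrite e2 mem_pfix; apply: sub; rewrite -mem_pfix.
have fixsg : forall x y, x \in N ++ A -> y \in N ++ A -> (x.1 = x.2 \/ y.1 = y.2) -> sgn_opp x y = false.
  by move=> x y _ _ [e|e]; [apply: sgn_fix1|apply: sgn_fix2].
have inI : forall x y, x \in N ++ A -> y \in N ++ A -> f < x.1 < b -> f < y.1 < b -> sgn_opp x y = false.
  by move=> x y xA yA hx hy; apply: (sgn_same (d := d)); [apply: Hd|apply: Hd].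
have fixb : forall y, y \in N ++ A -> y.1 = b -> y.1 = y.2.
  move=> [y1 y2] yA /= e; rewrite e in yA *; exact: esym (piso_fun PNA yA bF).
have fixf : forall y, y \in N ++ A -> y.1 = f -> y.1 = y.2.
  move=> [y1 y2] yA /= e; rewrite e in yA *; exact: esym (piso_fun PNA yA fF).
move=> x y; rewrite !mem_cat => /orP[xN|xA] /orP[yN|yA] xy sg.
- case: (HN _ xN) => [e|/andP[fx xb]]; first by rewrite sgn_fix1 in sg.
  case: (HN _ yN) => [e|/andP[fy yb]]; first by rewrite sgn_fix2 in sg.
  by rewrite inI ?mem_cat ?xN ?yN ?fx ?xb ?fy ?yb in sg.
- have xNA : x \in N ++ A by rewrite mem_cat xN.
  have yNA : y \in N ++ A by rewrite mem_cat yA orbT.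
  case: (HN _ xN) => [e|/andP[fx xb]]; first by rewrite sgn_fix1 in sg.
  case: (ltgtP y.1 b) => [yb|b_y|yb].
  + by rewrite inI // ?fx ?xb ?yb ?(lt_trans fx xy) in sg.
  + by exists (b, b) => //; rewrite /= eqxx xb b_y.
  + by have e := fixb _ yNA yb; rewrite sgn_fix2 in sg.
- have xNA : x \in N ++ A by rewrite mem_cat xA orbT.
  have yNA : y \in N ++ A by rewrite mem_cat yN.
  case: (HN _ yN) => [e|/andP[fy yb]]; first by rewrite sgn_fix2 in sg.
  case: (ltgtP x.1 f) => [xf|fx|xf].
  + by exists (f, f) => //; rewrite /= eqxx xf fy.
  + by rewrite inI // ?fy ?yb ?fx ?(lt_trans xy yb) in sg.
  + by have e := fixf _ xNA xf; rewrite sgn_fix1 in sg.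
- by have [z zA Hz] := H _ _ xA yA xy sg; exists z => //; apply: sub.
Qed.

Definition bnd (a b : rat) (A : piso) : Prop :=
  [/\ (a, a) \in A, (b, b) \in A & forall x, x \in A -> a <= x.1 <= b].

Definition dm (d : bool) (A : piso) (f b : rat) : Prop :=
  [/\ (f, f) \in A, (b, b) \in A &
      forall x, x \in A -> f < x.1 < b -> if d then x.1 < x.2 else x.2 < x.1].

Definition coords (A : piso) := pdom A ++ pran A.

Lemma coordsP (A : piso) c : reflect (exists2 x, x \in A & c = x.1 \/ c = x.2) (c \in coords A).
Proof.
rewrite mem_cat; apply: (iffP orP) => [[/pdomP[y H]|/pranP[y H]]|[x xA [->|->]]].
- by exists (c, y) => //; left.
- by exists (y, c) => //; right.
- by left; apply/pdomP; exists x.2; case: x xA.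
- by right; apply/pranP; exists x.1; case: x xA.
Qed.

Lemma bnd_snd a b A x : is_piso A -> bnd a b A -> x \in A -> a <= x.2 <= b.
Proof.
move=> PA [aA bA H] xA; have /andP[h1 h2] := H _ xA.
have [e1 _] := piso_fix_lt PA aA xA; have [_ e2] := piso_fix_lt PA bA xA.
by rewrite leNgt -e1 -leNgt h1 /= leNgt -e2 -leNgt h2.
Qed.

Lemma bnd_coords a b A c : is_piso A -> bnd a b A -> c \in coords A -> a <= c <= b.
Proof.
move=> PA B /coordsP[x xA]; case=> ->; first by case: B => _ _; apply.
exact: (bnd_snd PA B xA).
Qed.

Lemma bnd_smin a b A : bnd a b A -> smin (pdom A) = a.
Proof.
move=> [aA _ H]; apply: smin_eq; first by apply/pdomP; exists a.
by move=> x /pdomP[y xy]; have /andP[] := H _ xy.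
Qed.

Lemma bnd_smax a b A : bnd a b A -> smax (pdom A) = b.
Proof.
move=> [_ bA H]; apply: smax_eq; first by apply/pdomP; exists b.
by move=> x /pdomP[y xy]; have /andP[] := H _ xy.
Qed.

Lemma mem_Ess a b A e : bnd a b A -> (e \in Ess A) = [&& e \in coords A, e != a & e != b].
Proof. by move=> B; rewrite /Ess mem_filter (bnd_smin B) (bnd_smax B) andbC. Qed.

Lemma Ess_bnd a b A e : is_piso A -> bnd a b A -> e \in Ess A -> a < e < b.
Proof.
move=> PA B; rewrite (mem_Ess _ B) => /and3P[eC ea eb].
have /andP[h1 h2] := bnd_coords PA B eC.
by rewrite !lt_neqAle h1 h2 eq_sym ea eb.
Qed.

Lemma coords_cases a b A c : bnd a b A -> c \in coords A -> [\/ c = a, c = b | c \in Ess A].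
Proof.
move=> B cC; rewrite (mem_Ess _ B) cC /=.
case: (c =P a) => [ea|/eqP na]; first by constructor 1.
case: (c =P b) => [eb|/eqP nb]; first by constructor 2.
by constructor 3.
Qed.

Lemma coords_orient d A x : x \in orient d A -> x.1 \in coords A /\ x.2 \in coords A.
Proof.
rewrite mem_orient; case: d => xA; split; apply/coordsP.
- by exists x => //; left.
- by exists x => //; right.
- by exists (x.2, x.1) => //; right.
- by exists (x.2, x.1) => //; left.
Qed.

Lemma dm_orient d A f b : is_piso A -> dm d A f b -> dm true (orient d A) f b.
Proof.
case: d => //= PA [fA bA H]; split; first by rewrite mem_pinv.
  by rewrite mem_pinv.
move=> [x1 x2] xA /andP[fx xb]; rewrite mem_pinv in xA; simpl in fx, xb |- *.
have [_ e1] := piso_fix_lt PA fA xA; have [e2 _] := piso_fix_lt PA bA xA.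
simpl in e1, e2.
by have := H _ xA; rewrite /= e1 e2 fx xb; apply.
Qed.

Lemma dm_orientK d A f b : is_piso A -> dm true (orient d A) f b -> dm d A f b.
Proof.
move=> PA; case: d => //= [[fA bA H]]; rewrite mem_pinv in fA; rewrite mem_pinv in bA.
split => // [[x1 x2]] /= xA /andP[fx xb].
have [_ e1] := piso_fix_lt PA fA xA; have [e2 _] := piso_fix_lt PA bA xA.
simpl in e1, e2.
have xA' : (x2, x1) \in pinv A by rewrite mem_pinv.
by have := H _ xA'; rewrite /= -e1 -e2 fx xb; apply.
Qed.

Lemma orient_piso_bnd a b d A x : is_piso A -> bnd a b A -> x \in orient d A -> a <= x.1 <= b /\ a <= x.2 <= b.
Proof.
move=> PA B /coords_orient[h1 h2]; split; exact: (bnd_coords PA B).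
Qed.

Lemma bnd_ext a b (N A : piso) : bnd a b A -> (forall x, x \in N -> a <= x.1 <= b) -> bnd a b (N ++ A).
Proof.
move=> [aA bA H] HN; split; rewrite ?mem_cat ?aA ?bA ?orbT //.
by move=> x; rewrite mem_cat => /orP[/HN|/H].
Qed.

Lemma fix_snd (A : piso) b x : is_piso A -> (b, b) \in A -> x \in A -> x.1 = b -> x.2 = b.
Proof. by move=> PA bA; case: x => x1 x2 xA /= e; rewrite e in xA; apply: piso_fun PA xA bA. Qed.

Lemma coreC a b (M : piso) (d : bool) f (ys : seq rat) :
  is_piso M -> bnd a b M -> Inf2 M -> a <= f -> f < b -> dm d M f b ->
  (forall y, y \in ys -> f < y < b) ->
  exists N : piso, [/\ (forall x, x \in N -> f < x.1 < b /\ f < x.2 < b),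
     is_piso (N ++ M) /\ bnd a b (N ++ M), Inf2 (N ++ M), dm d (N ++ M) f b &
     (forall y, y \in ys -> exists z, [/\ papp (orient d (N ++ M)) y = Some z, y < z & z < b])].
Proof.
move=> PM BM IM af fb DM Hys.
set R := orient d M.
have PR : is_piso R by apply: piso_orient.
have [fR bR HR] := dm_orient PM DM.
have [|| N0 [PN0 HN1 HN2]] := ext_list (T := [seq (y, y) | y <- ys]) PR.
- move=> t x /mapP[y yys ->] xR /= le.
  have /andP[fy yb] := Hys _ yys.
  have [/andP[_ xb] _] := orient_piso_bnd PM BM xR.
  move: xb; rewrite le_eqVlt => /orP[/eqP e|x1b].
    by rewrite (fix_snd PR bR xR e) yb.
  have lt := HR _ xR; rewrite (lt_le_trans fy le) x1b /= in lt.
  by rewrite (le_lt_trans le (lt isT)).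
- by move=> t t' /mapP[y _ ->] /mapP[y' _ ->] /= le; left.
have sub : {subset R <= N0 ++ R} by move=> x xR; rewrite mem_cat xR orbT.
have PNR : is_piso (N0 ++ R) by [].
have bNR : (b, b) \in N0 ++ R by apply: sub.
have N0I : forall x, x \in N0 -> f < x.1 < b /\ f < x.2 < b /\ x.1 < x.2.
  move=> x xN; have [t /mapP[y yys ->] [/= e1 e2 _]] := HN1 _ xN.
  have /andP[fy yb] := Hys _ yys.
  have x2b : x.2 < b.
    have : (x.1 < b) = (x.2 < b) := @piso_ord _ x (b, b) PNR (ltac:(by rewrite mem_cat xN)) bNR.
    by rewrite e1 yb => <-.
  by rewrite e1 fy yb x2b (lt_trans fy e2) e2.
exists (orient d N0).
have eNM : orient d N0 ++ M = orient d (N0 ++ R) by rewrite orient_cat orient_orient.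
have memN : forall x, x \in orient d N0 -> f < x.1 < b /\ f < x.2 < b /\ (if d then x.1 < x.2 else x.2 < x.1).
  move=> x; rewrite mem_orient; case: (d) => /= xN.
    by have [h1 [h2 h3]] := N0I _ xN.
  by have [h1 [h2 h3]] := N0I _ xN.
have PNM : is_piso (orient d N0 ++ M) by rewrite eNM; apply: piso_orient.
have BNM : bnd a b (orient d N0 ++ M).
  apply: bnd_ext => // x /memN[/andP[h1 h2] _].
  by rewrite (ltW h2) andbT (le_trans af (ltW h1)).
have monoNM : forall x, x \in orient d N0 ++ M -> f < x.1 < b -> if d then x.1 < x.2 else x.2 < x.1.
  move=> x; rewrite mem_cat => /orP[/memN[_ [_ ->]]//|xM].
  by case: DM => _ _; apply.
split => //.
- by move=> x /memN[h1 [h2 _]].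
- apply: (Inf2_ext (f := f) (b := b) (d := d)) => //.
  + by rewrite (bnd_smin BNM) (bnd_smin BM).
  + by rewrite (bnd_smax BNM) (bnd_smax BM).
  + by case: DM => fM _ _; rewrite mem_cat fM orbT.
  + by case: DM => _ bM _; rewrite mem_cat bM orbT.
  + by move=> x /memN[h1 _]; right.
- by case: DM => fM bM _; split => //; rewrite mem_cat ?fM ?bM orbT.
move=> y yys; have [z [zin tz yz]] := HN2 (y, y) (map_f _ yys).
exists z; rewrite eNM orient_orient; split => //.
- exact: papp_piso.
- have /andP[_ yb] := Hys _ yys.
  by rewrite -(piso_ord PNR zin bNR).
Qed.

Lemma orient_cons d (A : piso) f : orient d ((f, f) :: A) = (f, f) :: orient d A.
Proof. by case: d. Qed.

Lemma coreS a b (M : piso) (d : bool) K (ys : seq rat) :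
  is_piso M -> bnd a b M -> Inf2 M -> a < b -> K < b ->
  (forall y, y \in ys -> a < y < b) ->
  (forall y e, y \in ys -> e \in Ess M -> e < y) ->
  exists N : piso, exists fB, [/\ (a <= fB /\ fB < b) /\ (forall y, y \in ys -> fB < y),
     (forall x, x \in N -> a < x.1 < b /\ a < x.2 < b),
     (is_piso (N ++ M) /\ bnd a b (N ++ M)) /\ Inf2 (N ++ M), dm d (N ++ M) fB b &
     (forall y, y \in ys -> exists z, [/\ papp (orient d (N ++ M)) y = Some z, y < z, K < z & z < b])].
Proof.
move=> PM BM IM ab Kb Hys HE.
set L := smax (a :: Ess M); set U := smin (b :: ys).
have LU : L < U.
  apply: smax_lt => // l; rewrite in_cons => /orP[/eqP->|lE]; apply: smin_gt => // u;
    rewrite in_cons => /orP[/eqP->|uy] //.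
  - by have /andP[] := Hys _ uy.
  - by have /andP[] := Ess_bnd PM BM lE.
  - exact: HE.
set fB := (L + U) / 2.
have [LfB fBU] := midf_lt LU.
have aL : a <= L by apply: smax_ge; rewrite mem_head.
have Ub : U <= b by apply: smin_le; rewrite mem_head.
have fBy : forall y, y \in ys -> fB < y.
  by move=> y yys; apply: lt_le_trans fBU _; apply: smin_le; rewrite in_cons yys orbT.
have afB : a < fB by apply: le_lt_trans LfB.
have fBb : fB < b by apply: lt_le_trans Ub.
have cc : forall c, c \in coords M -> c = b \/ c <= L.
  move=> c cC; case: (coords_cases BM cC) => [->|->|cE]; [right|left|right] => //.
  by apply: smax_ge; rewrite in_cons cE orbT.
have [aM bM HM] := BM.
have pairc : forall x, x \in M -> (x.1 = b /\ x.2 = b) \/ (x.1 <= L /\ x.2 <= L).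
  move=> x xM.
  have c1 : x.1 \in coords M by apply/coordsP; exists x => //; left.
  have c2 : x.2 \in coords M by apply/coordsP; exists x => //; right.
  case: (cc _ c1) => [e1|l1].
    by left; split => //; apply: fix_snd PM bM xM e1.
  case: (cc _ c2) => [e2|l2]; last by right.
  have e1 : x.1 = b by case: x xM e2 {c1 c2 l1} => x1 x2 xM /= e2; rewrite e2 in xM; apply: piso_inj PM xM bM.
  by move: (le_lt_trans l1 (lt_trans LfB fBb)); rewrite e1 ltxx.
have M1P : is_piso ((fB, fB) :: M).
  apply: piso_add => //.
    apply/negP => /pdomP[y fyM]; case: (pairc _ fyM) => /= [[e _]|[l _]].
      by move: fBb; rewrite e ltxx.
    by move: (lt_le_trans LfB l); rewrite ltxx.
  move=> x xM; case: (pairc _ xM) => [[-> ->]|[l1 l2]]; first by [].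
  by rewrite (le_lt_trans l1 LfB) (le_lt_trans l2 LfB) !ltNge (ltW (le_lt_trans l1 LfB)) (ltW (le_lt_trans l2 LfB)).
set R := (fB, fB) :: orient d M.
have PR : is_piso R by rewrite /R -orient_cons; apply: piso_orient.
have Rc : forall x, x \in orient d M -> (x.1 = b /\ x.2 = b) \/ (x.1 <= L /\ x.2 <= L).
  move=> x; rewrite mem_orient; case: (d) => xM; first exact: pairc.
  by case: (pairc _ xM) => /= [[-> ->]|[-> ->]]; [left|right].
have bR : (b, b) \in R by rewrite /R in_cons mem_orient; case: (d) => /=; rewrite bM orbT.
have [|| N0 [PN0 HN1 HN2]] := ext_list (T := [seq (y, K) | y <- ys]) PR.
- move=> t x /mapP[y yys ->] xR /=.
  have fy := fBy _ yys; rewrite /R in_cons in xR; case/orP: xR => [/eqP -> /= le|xR le].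
    by move: (le_lt_trans le fy); rewrite ltxx.
  case: (Rc _ xR) => [[_ ->]|[l1 _]]; last first.
    by move: (lt_trans (le_lt_trans le (le_lt_trans l1 LfB)) fy); rewrite ltxx.
  by rewrite Kb; have /andP[] := Hys _ yys.
- by move=> t t' /mapP[y _ ->] /mapP[y' _ ->] /= le; left.
have sub : {subset R <= N0 ++ R} by move=> x xR; rewrite mem_cat xR orbT.
have PNR : is_piso (N0 ++ R) by [].
have bNR : (b, b) \in N0 ++ R by apply: sub.
have N0I : forall x, x \in N0 -> fB < x.1 < b /\ fB < x.2 < b /\ x.1 < x.2.
  move=> x xN; have [t /mapP[y yys ->] [/= e1 _ e2]] := HN1 _ xN.
  have /andP[_ yb] := Hys _ yys; have fy := fBy _ yys.
  have x2b : x.2 < b.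
    have : (x.1 < b) = (x.2 < b) := @piso_ord _ x (b, b) PNR (ltac:(by rewrite mem_cat xN)) bNR.
    by rewrite e1 yb => <-.
  by rewrite e1 fy yb x2b (lt_trans fy e2) e2.
exists (orient d N0 ++ [:: (fB, fB)]), fB.
have eNM : (orient d N0 ++ [:: (fB, fB)]) ++ M = orient d (N0 ++ R).
  by rewrite -catA /= /R orient_cat orient_cons orient_orient.
have memN0 : forall x, x \in orient d N0 -> fB < x.1 < b /\ fB < x.2 < b /\ (if d then x.1 < x.2 else x.2 < x.1).
  move=> x; rewrite mem_orient; case: (d) => /= xN.
    by have [h1 [h2 h3]] := N0I _ xN.
  by have [h1 [h2 h3]] := N0I _ xN.
have memN : forall x, x \in orient d N0 ++ [:: (fB, fB)] -> x = (fB, fB) \/ (fB < x.1 < b /\ fB < x.2 < b /\ (if d then x.1 < x.2 else x.2 < x.1)).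
  move=> x; rewrite mem_cat mem_seq1 => /orP[/memN0 H|/eqP->]; by [right|left].
have PNM : is_piso ((orient d N0 ++ [:: (fB, fB)]) ++ M) by rewrite eNM; apply: piso_orient.
have BNM : bnd a b ((orient d N0 ++ [:: (fB, fB)]) ++ M).
  apply: bnd_ext => // x /memN[->|[/andP[h1 h2] _]] /=; first by rewrite !ltW.
  by rewrite (ltW h2) andbT (ltW (lt_trans afB h1)).
have monoNM : forall x, x \in (orient d N0 ++ [:: (fB, fB)]) ++ M -> fB < x.1 < b -> if d then x.1 < x.2 else x.2 < x.1.
  move=> x; rewrite mem_cat => /orP[/memN[->|[_ [_ ->]]]|xM] //=; first by rewrite ltxx.
  case: (pairc _ xM) => [[-> _]|[l1 _]]; first by rewrite ltxx andbF.
  by rewrite ltNge (ltW (le_lt_trans l1 LfB)).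
have fNM : (fB, fB) \in (orient d N0 ++ [:: (fB, fB)]) ++ M by rewrite !mem_cat mem_seq1 eqxx orbT.
have bNM : (b, b) \in (orient d N0 ++ [:: (fB, fB)]) ++ M by rewrite mem_cat bM orbT.
split => //.
- by rewrite (ltW afB).
- move=> x /memN[->|[/andP[h1 h2] [/andP[h3 h4] _]]] /=; first by rewrite afB fBb.
  by rewrite (lt_trans afB h1) h2 (lt_trans afB h3) h4.
- split => //; apply: (Inf2_ext (f := fB) (b := b) (d := d)) => //.
  + by rewrite (bnd_smin BNM) (bnd_smin BM).
  + by rewrite (bnd_smax BNM) (bnd_smax BM).
  + by move=> x /memN[->|[h1 _]]; [left|right].
move=> y yys; have [z [zin Kz yz]] := HN2 (y, K) (map_f _ yys).
exists z; rewrite eNM orient_orient; split => //.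
- exact: papp_piso.
- have /andP[_ yb] := Hys _ yys.
  by rewrite -(piso_ord PNR zin bNR).
Qed.

Definition St a b (E : seq rat) (v : seq letter) (P Q : piso) : Prop :=
  [/\ (is_piso P /\ is_piso Q) /\ (bnd a b P /\ bnd a b Q), Inf2 P /\ Inf2 Q, reduced v &
     exists l v', v = l :: v' /\ exists f, [/\ a <= f /\ f < b, dm (posl l) (Mmap P Q l) f b &
       forall c, c \in E -> exists y, [/\ weval P Q v c = Some y, f < y, y < b &
           forall e, e \in Ess (Omap P Q l) -> e < y]]].

Lemma St_of a b E v P Q l (N : piso) f' :
  (is_piso P /\ is_piso Q) /\ (bnd a b P /\ bnd a b Q) -> Inf2 P /\ Inf2 Q -> reduced (l :: v) ->
  (forall x, x \in N -> a < x.1 < b /\ a < x.2 < b) ->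
  is_piso (N ++ Mmap P Q l) -> bnd a b (N ++ Mmap P Q l) -> Inf2 (N ++ Mmap P Q l) ->
  a <= f' /\ f' < b -> dm (posl l) (N ++ Mmap P Q l) f' b ->
  (forall c, c \in E -> exists y, weval P Q v c = Some y /\
      exists z, [/\ papp (orient (posl l) (N ++ Mmap P Q l)) y = Some z, f' < z, z < b &
                    forall e, e \in Ess (Omap P Q l) -> e < z]) ->
  exists NP NQ : piso, [/\ (forall x, x \in NP -> a < x.1 < b /\ a < x.2 < b),
     (forall x, x \in NQ -> a < x.1 < b /\ a < x.2 < b) & St a b E (l :: v) (NP ++ P) (NQ ++ Q)].
Proof.
move=> [[PP PQ] [BP BQ]] [IP IQ] rv HN PNM BNM INM hf DNM Him.
exists (if isS l then N else [::]), (if isS l then [::] else N).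
have eM : Mmap ((if isS l then N else [::]) ++ P) ((if isS l then [::] else N) ++ Q) l = N ++ Mmap P Q l.
  by rewrite /Mmap; case: (isS l).
have eO : Omap ((if isS l then N else [::]) ++ P) ((if isS l then [::] else N) ++ Q) l = Omap P Q l.
  by rewrite /Omap; case: (isS l).
set P' := (if isS l then N else [::]) ++ P; set Q' := (if isS l then [::] else N) ++ Q.
have sP : {subset P <= P'} by move=> x xP; rewrite mem_cat xP orbT.
have sQ : {subset Q <= Q'} by move=> x xQ; rewrite mem_cat xQ orbT.
have [PP' PQ'] : is_piso P' /\ is_piso Q'.
  by move: PNM; rewrite /P' /Q' /Mmap; case: (isS l).
split.
- by case: (isS l) => /= x; rewrite ?in_nil //; apply: HN.
- by case: (isS l) => /= x; rewrite ?in_nil //; apply: HN.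
split => //.
- by split => //; move: BNM; rewrite /P' /Q' /Mmap; case: (isS l).
- by move: INM; rewrite /P' /Q' /Mmap; case: (isS l).
exists l, v; split => //; exists f'; split => //; first by rewrite eM.
move=> c cE; have [y [ey [z [ez fz zb Hz]]]] := Him _ cE.
exists z; rewrite eO; split => //.
by rewrite weval_cons (weval_ext PP' PQ' sP sQ ey) /= act_eq eM.
Qed.

Lemma same_type l l0 v : reduced [:: l, l0 & v] -> isS l = isS l0 -> l = l0.
Proof. by case: l; case: l0. Qed.

Lemma Mmap_same P Q l l0 : isS l = isS l0 -> Mmap P Q l = Mmap P Q l0.
Proof. by rewrite /Mmap => ->. Qed.
Lemma Omap_same P Q l l0 : isS l = isS l0 -> Omap P Q l = Omap P Q l0.
Proof. by rewrite /Omap => ->. Qed.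
Lemma Mmap_diff P Q l l0 : isS l != isS l0 -> Mmap P Q l = Omap P Q l0.
Proof. by rewrite /Mmap /Omap; case: (isS l); case: (isS l0). Qed.
Lemma Omap_diff P Q l l0 : isS l != isS l0 -> Omap P Q l = Mmap P Q l0.
Proof. by rewrite /Mmap /Omap; case: (isS l); case: (isS l0). Qed.

Lemma piso_Mmap P Q l : is_piso P -> is_piso Q -> is_piso (Mmap P Q l).
Proof. by rewrite /Mmap; case: (isS l). Qed.
Lemma bnd_Mmap a b P Q l : bnd a b P -> bnd a b Q -> bnd a b (Mmap P Q l).
Proof. by rewrite /Mmap; case: (isS l). Qed.
Lemma Inf2_Mmap P Q l : Inf2 P -> Inf2 Q -> Inf2 (Mmap P Q l).
Proof. by rewrite /Mmap; case: (isS l). Qed.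
Lemma piso_Omap P Q l : is_piso P -> is_piso Q -> is_piso (Omap P Q l).
Proof. by rewrite /Omap; case: (isS l). Qed.
Lemma bnd_Omap a b P Q l : bnd a b P -> bnd a b Q -> bnd a b (Omap P Q l).
Proof. by rewrite /Omap; case: (isS l). Qed.

Lemma step a b E v P Q l : a < b -> St a b E v P Q -> reduced (l :: v) ->
  exists NP NQ : piso, [/\ (forall x, x \in NP -> a < x.1 < b /\ a < x.2 < b),
     (forall x, x \in NQ -> a < x.1 < b /\ a < x.2 < b) & St a b E (l :: v) (NP ++ P) (NQ ++ Q)].
Proof.
move=> ab [[[PP PQ] [BP BQ]] [IP IQ] rv [l0 [v' [ev [f [[af fb] Dm Himg]]]]]] rlv.
set ys := [seq odflt 0 (weval P Q v c) | c <- E].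
have Hys : forall y, y \in ys -> exists2 c, c \in E & weval P Q v c = Some y.
  move=> y /mapP[c cE ->]; exists c => //.
  by have [y' [-> _ _ _]] := Himg _ cE.
have Hys2 : forall y, y \in ys -> [/\ f < y, y < b & forall e, e \in Ess (Omap P Q l0) -> e < y].
  move=> y /Hys[c cE e]; have [y' [e' h1 h2 h3]] := Himg _ cE.
  by move: e; rewrite e' => -[<-].
have PM := piso_Mmap l PP PQ; have BM := bnd_Mmap l BP BQ; have IM := Inf2_Mmap l IP IQ.
case: (boolP (isS l == isS l0)) => [/eqP st|dt].
- have el : l = l0 by move: (rlv); rewrite ev => r; exact: same_type r st.
  subst l0.
  have [N [HN [PN BN] IN DN Hz]] := coreC (ys := ys) PM BM IM af fb Dm
     (fun y yy => let: And3 h1 h2 _ := Hys2 y yy in introT andP (conj h1 h2)).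
  apply: (St_of (N := N) (f' := f)) => //.
  + move=> x /HN[/andP[h1 h2] /andP[h3 h4]].
    by rewrite h2 h4 (le_lt_trans af h1) (le_lt_trans af h3).
  + move=> c cE; have [y [ey h1 h2 h3]] := Himg _ cE.
    exists y; split => //.
    have yy : y \in ys by apply/mapP; exists c => //; rewrite ey.
    have [z [ez yz zb]] := Hz _ yy.
    exists z; split => //; first exact: lt_trans yz.
    by move=> e eE; apply: lt_trans (h3 _ eE) yz.
- set K := smax (a :: Ess (Mmap P Q l0)).
  have Kb : K < b.
    apply: smax_lt => // x; rewrite in_cons => /orP[/eqP->//|xE].
    have PM0 := piso_Mmap l0 PP PQ; have BM0 := bnd_Mmap l0 BP BQ.
    by have /andP[] := Ess_bnd PM0 BM0 xE.
  have [||N [fB [[[afB fBb] fBy] HN [[PN BN] IN] DN Hz]]] := coreS (K := K) (ys := ys) (posl l) PM BM IM ab Kb.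
  + move=> y yy; have [h1 h2 _] := Hys2 _ yy.
    by rewrite h2 (le_lt_trans af h1).
  + move=> y e yy; rewrite (Mmap_diff _ _ dt) => eE.
    by have [_ _ h] := Hys2 _ yy; apply: h.
  apply: (St_of (N := N) (f' := fB)) => //.
  move=> c cE; have [y [ey h1 h2 h3]] := Himg _ cE.
  exists y; split => //.
  have yy : y \in ys by apply/mapP; exists c => //; rewrite ey.
  have [z [ez yz Kz zb]] := Hz _ yy.
  exists z; split => //; first exact: lt_trans (fBy _ yy) yz.
  move=> e; rewrite (Omap_diff _ _ dt) => eE.
  apply: le_lt_trans Kz; apply: smax_ge; by rewrite in_cons eE orbT.
Qed.

Lemma reduced_tail x s : reduced (x :: s) -> reduced s.
Proof. by case: s => //= y s /andP[]. Qed.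

Lemma St_u a b E w P Q u : a < b -> St a b E w P Q -> reduced (u ++ w) ->
  exists NP NQ : piso, [/\ (forall x, x \in NP -> a < x.1 < b /\ a < x.2 < b),
     (forall x, x \in NQ -> a < x.1 < b /\ a < x.2 < b) & St a b E (u ++ w) (NP ++ P) (NQ ++ Q)].
Proof.
move=> ab S; elim: u => [|l u IH] r.
  by exists [::], [::]; split.
have [NP1 [NQ1 [H1 H2 S1]]] := IH (reduced_tail r).
have [NP2 [NQ2 [H3 H4 S2]]] := step ab S1 r.
exists (NP2 ++ NP1), (NQ2 ++ NQ1); rewrite -!catA; split => // x; rewrite mem_cat => /orP[];
  by [apply: H1|apply: H2|apply: H3|apply: H4].
Qed.

Lemma pinc_dm (A : piso) f b : p_increasing A f b -> dm true A f b.
Proof.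
case=> _ _ h1 h2 H; split; [exact: papp_mem h1|exact: papp_mem h2|].
by move=> [c y] cy /= I; apply: H cy I.
Qed.
Lemma pdec_dm (A : piso) f b : p_decreasing A f b -> dm false A f b.
Proof.
case=> _ _ h1 h2 H; split; [exact: papp_mem h1|exact: papp_mem h2|].
by move=> [c y] cy /= I; apply: H cy I.
Qed.
Lemma dm_pinc (A : piso) f b : is_piso A -> dm true A f b -> p_increasing A f b.
Proof.
move=> PA [fA bA H]; split; try (apply/pdomP; eexists; eassumption); try exact: papp_piso.
by move=> c y cy I; apply: (H _ cy I).
Qed.
Lemma dm_pdec (A : piso) f b : is_piso A -> dm false A f b -> p_decreasing A f b.
Proof.
move=> PA [fA bA H]; split; try (apply/pdomP; eexists; eassumption); try exact: papp_piso.
by move=> c y cy I; apply: (H _ cy I).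
Qed.

Lemma local a b (P0 Q0 P Q : piso) w u : a < b ->
  bnd a b P -> bnd a b Q -> bnd a b P0 -> bnd a b Q0 ->
  lib_p_el P0 Q0 P Q w -> reduced (u ++ w) -> (u = [::] \/ starts_t u) ->
  exists NP NQ : piso, [/\ (forall x, x \in NP -> a < x.1 < b /\ a < x.2 < b),
     (forall x, x \in NQ -> a < x.1 < b /\ a < x.2 < b) &
     lib_p_el P0 Q0 (NP ++ P) (NQ ++ Q) (u ++ w)].
Proof.
move=> ab BP BQ BP0 BQ0 L ruw [->|su]; first by exists [::], [::]; split.
case: L => [[PP [PQ [exP [exQ rw]]]] [iP iQ] sm stw [[Hdef Hmin] [a' [a'b [Himg Hm]]]]].
set E := Ess P0 ++ Ess Q0.
rewrite (bnd_smax BQ0) in a'b Himg Hm.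
have S : St a b E w P Q.
  split => //; first by split; apply: inf_Inf2.
  case: w ruw rw stw Hdef Hmin Himg Hm => [//|l v'] ruw rw stw Hdef Hmin Himg Hm.
  have Dm : dm (posl l) (Mmap P Q l) a' b.
    by move: stw Hm; case: (l) => //= _ Hm; [apply: pinc_dm|apply: pdec_dm].
  exists l, v'; split => //; exists a'; split => //.
    split => //; case: Dm => fM _ _.
    by case: (bnd_Mmap l BP BQ) => _ _ HB; have /andP[] := HB _ fM.
  have lT : isS l = false by move: stw; case: (l).
  move=> c cE.
  case E1: (weval P Q (l :: v') c) => [y|]; last by move: (Hdef _ cE); rewrite E1.
  exists y; have /andP[h1 h2] := Himg _ _ cE E1; split => //.
  rewrite /Omap lT => e eP.
  set m := smin E.
  have mE : m \in E by apply: smin_mem; apply/eqP => e0; rewrite e0 in cE.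
  case E2: (weval P Q (l :: v') m) => [ym|]; last by move: (Hdef _ mE); rewrite E2.
  have lt := Hmin m mE (fun c' c'E => smin_le c'E) ym E2 e eP.
  apply: lt_le_trans lt _.
  have : m <= c by apply: smin_le.
  rewrite le_eqVlt => /orP[/eqP em|mc].
    by move: E2; rewrite em E1 => -[->].
  by apply: ltW; apply: (weval_mono PP PQ E2 E1 mc).
have [NP [NQ [HP HQ S']]] := St_u ab S ruw.
exists NP, NQ; split => //.
case: S' => [[[PP' PQ'] [BP' BQ']] [IP' IQ'] ruw' [l [v' [ev [f [[af fb] Dm Hz]]]]]].
have lT : isS l = false by move: su ev; case: (u) => //= l1 u1 s1 [<- _]; case: l1 s1.
have sP : {subset P0 <= NP ++ P} by move=> x /exP xP; rewrite mem_cat xP orbT.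
have sQ : {subset Q0 <= NQ ++ Q} by move=> x /exQ xQ; rewrite mem_cat xQ orbT.
split.
- by [].
- by split; apply: Inf2_inf.
- by rewrite (bnd_smin BP') (bnd_smin BQ') (bnd_smax BP') (bnd_smax BQ') (bnd_smin BP0)
     (bnd_smin BQ0) (bnd_smax BP0) (bnd_smax BQ0).
- by move: su; case: (u).
split.
  split; first by move=> c /Hz[y [-> _ _ _]].
  move=> m mE _ y ey e eP; have [y' [ey' _ _ H]] := Hz _ mE.
  move: ey; rewrite ey' => -[<-]; apply: H; by rewrite /Omap lT.
exists f; rewrite (bnd_smax BQ0); split => //; split.
  by move=> c y cE ey; have [y' [ey' h1 h2 _]] := Hz _ cE; move: ey; rewrite ey' => -[<-]; rewrite h1 h2.
rewrite ev; move: Dm; rewrite /Mmap lT.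
by move: lT; case: (l) => //= _ D; [apply: dm_pinc|apply: dm_pdec].
Qed.

Lemma mem_restrict (P : piso) a b x : (x \in restrict P a b) = (x \in P) && (a <= x.1 <= b).
Proof. by rewrite /restrict mem_filter andbC. Qed.

Lemma restrict_cat (N P : piso) a b : restrict (N ++ P) a b = restrict N a b ++ restrict P a b.
Proof. exact: filter_cat. Qed.

Lemma restrict_all (N : piso) a b : (forall x, x \in N -> a <= x.1 <= b) -> restrict N a b = N.
Proof. by move=> H; apply/all_filterP/allP => x /H. Qed.

Lemma restrict_none (N : piso) a b : (forall x, x \in N -> ~~ (a <= x.1 <= b)) -> restrict N a b = [::].
Proof.
elim: N => [//|x N IH] H /=; rewrite (negbTE (H x (mem_head _ _))) IH //.
by move=> y yN; apply: H; rewrite in_cons yN orbT.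
Qed.

Lemma glue a b (N P : piso) : is_piso P -> (a, a) \in P -> (b, b) \in P ->
  (forall x, x \in N -> a < x.1 < b /\ a < x.2 < b) -> is_piso (N ++ restrict P a b) ->
  is_piso (N ++ P).
Proof.
move=> PP aP bP HN [u H].
have out : forall z, z \in P -> ~~ (a <= z.1 <= b) -> (z.1 < a /\ z.2 < a) \/ (b < z.1 /\ b < z.2).
  move=> z zP; rewrite negb_and -!ltNge => /orP[za|bz].
    by left; split => //; rewrite -(proj1 (piso_fix_lt PP aP zP)).
  by right; split => //; rewrite -(proj2 (piso_fix_lt PP bP zP)).
have inR : forall z, z \in P -> a <= z.1 <= b -> z \in N ++ restrict P a b.
  by move=> z zP I; rewrite mem_cat mem_restrict zP I orbT.
have inN : forall z, z \in N -> z \in N ++ restrict P a b by move=> z zN; rewrite mem_cat zN.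
split.
  move: u; rewrite /pdom !map_cat !cat_uniq => /and3P[u1 u2 u3]; rewrite u1 /=.
  case: PP => uP _; rewrite uP andbT.
  apply/hasPn => c /mapP[z zP ->]; apply/negP => /mapP[x xN ex].
  have [/andP[h1 h2] _] := HN _ xN.
  have I : a <= z.1 <= b by rewrite ex !ltW.
  have zR : z \in restrict P a b by rewrite mem_restrict zP I.
  move/hasPn: u2 => /(_ z.1 (map_f _ zR)).
  by rewrite ex map_f.
move=> x y; rewrite !mem_cat => /orP[xN|xP] /orP[yN|yP].
- by apply: H; apply: inN.
- case: (boolP (a <= y.1 <= b)) => [I|/(out _ yP)[[h1 h2]|[h1 h2]]]; first by apply: H; [apply: inN|apply: inR].
    have [/andP[x1 _] /andP[x2 _]] := HN _ xN.
    by rewrite (lt_gtF (lt_trans h1 x1)) (lt_gtF (lt_trans h2 x2)).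
  have [/andP[_ x1] /andP[_ x2]] := HN _ xN.
  by rewrite (lt_trans x1 h1) (lt_trans x2 h2).
- case: (boolP (a <= x.1 <= b)) => [I|/(out _ xP)[[h1 h2]|[h1 h2]]]; first by apply: H; [apply: inR|apply: inN].
    have [/andP[y1 _] /andP[y2 _]] := HN _ yN.
    by rewrite (lt_trans h1 y1) (lt_trans h2 y2).
  have [/andP[_ y1] /andP[_ y2]] := HN _ yN.
  by rewrite (lt_gtF (lt_trans y1 h1)) (lt_gtF (lt_trans y2 h2)).
- by case: PP => _; apply.
Qed.

Lemma smin_cat_pdom (N P : piso) a b : a \in pdom P -> b \in pdom P ->
  (forall x, x \in N -> a < x.1 < b) ->
  smin (pdom (N ++ P)) = smin (pdom P) /\ smax (pdom (N ++ P)) = smax (pdom P).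
Proof.
move=> aP bP HN; have ne : pdom P != [::] by apply/eqP => e; rewrite e in aP.
have sub : {subset pdom P <= pdom (N ++ P)} by move=> c; rewrite /pdom map_cat mem_cat => ->; rewrite orbT.
split.
  apply: smin_eq; first by apply: sub; apply: smin_mem.
  move=> c; rewrite /pdom map_cat mem_cat => /orP[/mapP[x xN ->]|cP]; last exact: smin_le.
  by have /andP[h _] := HN _ xN; apply: le_trans (smin_le aP) (ltW h).
apply: smax_eq; first by apply: sub; apply: smax_mem.
move=> c; rewrite /pdom map_cat mem_cat => /orP[/mapP[x xN ->]|cP]; last exact: smax_ge.
by have /andP[_ h] := HN _ xN; apply: le_trans (ltW h) (smax_ge bP).
Qed.

Lemma cf_mem p q c : (c \in common_fix p q) = (c \in pfix p) && (c \in pfix q).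
Proof. by rewrite /common_fix mem_sort mem_undup mem_filter andbC. Qed.

Lemma cf_sorted p q : sorted (fun x y : rat => x < y) (common_fix p q).
Proof.
have := lt_sorted_uniq_le (common_fix p q); rewrite /= => ->.
by rewrite /common_fix sort_uniq undup_uniq sort_sorted //; apply: le_total.
Qed.

Lemma bnd_restrict (X : piso) a b : a < b -> (a, a) \in X -> (b, b) \in X -> bnd a b (restrict X a b).
Proof.
move=> ab aX bX; split; rewrite ?mem_restrict ?aX ?bX /= ?lexx ?(ltW ab) //.
by move=> x; rewrite mem_restrict => /andP[].
Qed.

Lemma outer (p q p' q' : piso) w u : lib_p p q p' q' w -> reduced (u ++ w) -> (u = [::] \/ starts_t u) ->
  forall J, (J <= (size (common_fix p q)).-1)%N -> exists P Q : piso,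
   [/\ is_piso P /\ is_piso Q, {subset p' <= P} /\ {subset q' <= Q},
       (smin (pdom P) = smin (pdom p') /\ smax (pdom P) = smax (pdom p')) /\
       (smin (pdom Q) = smin (pdom q') /\ smax (pdom Q) = smax (pdom q')) &
       forall j, (j.+1 < size (common_fix p q))%N ->
         let a := nth 0 (common_fix p q) j in let b := nth 0 (common_fix p q) j.+1 in
         lib_p_el (restrict p a b) (restrict q a b) (restrict P a b) (restrict Q a b)
                  (if (j < J)%N then u ++ w else w)].
Proof.
move=> [[PP' [PQ' [eP [eQ rw]]]] _ _ _ Hj] ruw su.
set A := common_fix p q.
have sA := cf_sorted p q.
have fixA : forall j, (j < size A)%N -> (nth 0 A j, nth 0 A j) \in p /\ (nth 0 A j, nth 0 A j) \in q.
  move=> j jA; have := mem_nth 0 jA; rewrite cf_mem => /andP[].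
  by rewrite !mem_pfix.
elim=> [|J IH] JA.
  exists p', q'; split => //; first by split.
have JA' : (J.+1 < size A)%N by move: JA; case: (size A) => // n; rewrite /= ltnS.
have [P [Q [[PP PQ] [sP sQ] [[mP MP] [mQ MQ]] H]]] := IH (ltnW JA).
pose a := nth 0 A J; pose b := nth 0 A J.+1.
have ab : a < b by apply: sorted_lt_nth => //; apply: ltnW.
have [ap aq] := fixA J (ltnW JA'); have [bp bq] := fixA J.+1 JA'.
have aP : (a, a) \in P by apply/sP/eP. have bP : (b, b) \in P by apply/sP/eP.
have aQ : (a, a) \in Q by apply/sQ/eQ. have bQ : (b, b) \in Q by apply/sQ/eQ.
have HJ := H J JA'; rewrite ltnn in HJ.
have [NP [NQ [HNP HNQ L]]] := local ab (bnd_restrict ab aP bP) (bnd_restrict ab aQ bQ)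
   (bnd_restrict ab ap bp) (bnd_restrict ab aq bq) HJ ruw su.
have [[PNP [PNQ _]] _ _ _ _] := L.
exists (NP ++ P), (NQ ++ Q); split.
- by split; [apply: (glue PP aP bP HNP PNP)|apply: (glue PQ aQ bQ HNQ PNQ)].
- by split => x xp; rewrite mem_cat ?sP ?sQ ?orbT.
- have apd : forall X : piso, (a, a) \in X -> a \in pdom X by move=> X aX; apply/pdomP; exists a.
  have bpd : forall X : piso, (b, b) \in X -> b \in pdom X by move=> X bX; apply/pdomP; exists b.
  have [e1 e2] := smin_cat_pdom (apd _ aP) (bpd _ bP) (fun x xN => proj1 (HNP x xN)).
  have [e3 e4] := smin_cat_pdom (apd _ aQ) (bpd _ bQ) (fun x xN => proj1 (HNQ x xN)).
  by rewrite e1 e2 e3 e4.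
move=> j jA /=.
have inI : forall (N : piso), (forall x, x \in N -> a < x.1 < b /\ a < x.2 < b) ->
   forall x, x \in N -> a <= x.1 <= b.
  by move=> N HN x /HN[/andP[h1 h2] _]; rewrite !ltW.
have outN : forall (N : piso), (forall x, x \in N -> a < x.1 < b /\ a < x.2 < b) -> j != J ->
    restrict N (nth 0 A j) (nth 0 A j.+1) = [::].
  move=> N HN jJ; apply: restrict_none => x /HN[/andP[h1 h2] _].
  rewrite negb_and -!ltNge; case: (ltngtP j J) jJ => // [jJ'|Jj] _.
    have lt : nth 0 A j.+1 < x.1 by apply: (le_lt_trans _ h1); exact: (sorted_le_nth sA jA (ltnW JA') jJ').
    by rewrite lt orbT.
  have lt : x.1 < nth 0 A j by apply: (lt_le_trans h2); exact: (sorted_le_nth sA JA' (ltnW jA) Jj).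
  by rewrite lt.
case: (ltngtP j J) => [jJ|Jj|ejJ].
- have jJ1 : (j < J.+1)%N by apply: ltnW.
  rewrite jJ1; have := H j jA; rewrite jJ /= !restrict_cat (outN NP) ?(outN NQ) //.
  + by rewrite neq_ltn jJ.
  + by rewrite neq_ltn jJ.
- rewrite ltnNge Jj /=; have := H j jA; rewrite ltnNge (ltnW Jj) /=.
  rewrite !restrict_cat (outN NP) ?(outN NQ) //.
  + by rewrite neq_ltn Jj orbT.
  + by rewrite neq_ltn Jj orbT.
- subst j; rewrite ltnSn !restrict_cat.
  by rewrite (restrict_all (inI _ HNP)) (restrict_all (inI _ HNQ)).
Qed.

Lemma part1 : forall (p q p' q' : piso) (w u : seq letter),
      is_piso p -> is_piso q -> pw_elementary p q ->
      lib_p p q p' q' w ->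
      reduced u -> (u = [::] \/ starts_t u) -> reduced (u ++ w) ->
      exists p'' q'' : piso,
        [/\ is_piso p'', is_piso q'', extends p'' p', extends q'' q' &
            lib_p p q p'' q'' (u ++ w)].
Proof.
move=> p q p' q' w u _ _ _ L _ su ruw.
have [P [Q [[PP PQ] [sP sQ] [[mP MP] [mQ MQ]] H]]] := outer L ruw su (leqnn _).
case: L => [[PP' [PQ' [eP [eQ rw]]]] m1 m2 [M1 M2] _].
exists P, Q; split => //; split.
- by split => //; split => //; split; [move=> x /eP/sP|split => // x /eQ/sQ].
- by rewrite mP m1.
- by rewrite mQ m2.
- by rewrite MP MQ M1 M2.
move=> j jA; have := H j jA.
by have -> : (j < (size (common_fix p q)).-1)%N by rewrite -ltnS prednK // (leq_ltn_trans _ jA).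
Qed.

Lemma inv_pair_swap x y : Defs.inv_pair (swap_letter x) (swap_letter y) = Defs.inv_pair x y.
Proof. by case: x; case: y. Qed.

Lemma reduced_swap s : reduced (map swap_letter s) = reduced s.
Proof.
elim: s => [//|x [|y s] IH] //=.
by move: IH => /= ->; rewrite inv_pair_swap.
Qed.

Lemma swap_swap l : swap_letter (swap_letter l) = l.
Proof. by case: l. Qed.

Local Close Scope ring_scope.
Theorem lemma3p10 :
  (forall (p q p' q' : piso) (w u : seq letter),
      is_piso p -> is_piso q -> pw_elementary p q ->
      lib_p p q p' q' w ->
      reduced u -> (u = [::] \/ starts_t u) -> reduced (u ++ w) ->
      exists p'' q'' : piso,
        [/\ is_piso p'', is_piso q'', extends p'' p', extends q'' q' &
            lib_p p q p'' q'' (u ++ w)]) /\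
  (forall (p q p' q' : piso) (w u : seq letter),
      is_piso p -> is_piso q -> pw_elementary p q ->
      lib_q p q p' q' w ->
      reduced u -> (u = [::] \/ starts_s u) -> reduced (u ++ w) ->
      exists p'' q'' : piso,
        [/\ is_piso p'', is_piso q'', extends p'' p', extends q'' q' &
            lib_q p q p'' q'' (u ++ w)]).
Proof.
split; first exact: part1.
move=> p q p' q' w u Pp Pq [i1 i2 e1 e2] L ru su ruw.
have [||||q'' [p'' [Pq'' Pp'' eq ep Lq]]] :=
  part1 (u := map swap_letter u) Pq Pp _ L.
- by split.
- by rewrite reduced_swap.
- by case: su => [->|H]; [left|right; move: H; case: (u) => // -[]].
- by rewrite -map_cat reduced_swap.
exists p'', q''; split => //.
by rewrite /lib_q map_cat.
Qed.
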